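(* Let $n\ge 6$ be divisible by $6$, let $C_n$ be the cycle on $n$ vertices, let $\widehat{C}_n$ be obtained from $C_n$ by attaching a distinct new pendant vertex (leaf) to every vertex of $C_n$, and let $H_n$ be obtained from $\widehat{C}_n$ by replacing every such leaf by a copy of the subdivided $K_4$, i.e. identifying each leaf with the subdivision vertex of a new copy of the subdivided $K_4$. Then $\dfrac{Z(H_n)}{|V(H_n)|}\ge \dfrac{5}{12}$.
   Context: Zero forcing: given a graph and a set $S$ of vertices initially colored black (all others white), repeatedly apply the rule: if a black vertex $v$ has exactly one white neighbor $u$, then $u$ becomes black. $S$ is a zero forcing set if eventually every vertex becomes black. $Z(G)$ is the minimum size of a zero forcing set of $G$. Subdivided $K_4$: the complete graph on 4 vertices $a,b,c,e$ with the edge $ab$ subdivided by a new vertex $s$ (5 vertices, edges $as, sb, ac, ae, bc, be, ce$); $s$ is its subdivision vertex. *)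

(* Defs.v *)
From HB Require Import structures.
From mathcomp Require Import all_boot all_order all_algebra.
Set Implicit Arguments. Unset Strict Implicit. Unset Printing Implicit Defensive.

Definition zf_step (T : finType) (adj : rel T) (S : {set T}) (X : {set T})
  : {set T} :=
  S :|: [set u | [exists v, [&& v \in X, adj v u &
                   [forall w, (adj v w && (w != u)) ==> (w \in X)]]]].

Definition zf_closure (T : finType) (adj : rel T) (S : {set T}) : {set T} :=
  fixset (zf_step adj S).

Definition zero_forcing_set (T : finType) (adj : rel T) (S : {set T}) : bool :=
  zf_closure adj S == [set: T].

(* Zero forcing number Z(G): minimum size of a zero forcing set
   ([set: T] is always one, so #|T| is a valid default). *)
Definition zf_number (T : finType) (adj : rel T) : nat :=
  \big[minn/#|T|]_(S : {set T} | zero_forcing_set adj S) #|S|.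

(** Vertex (i, k) with i : 'I_n, k : 'I_6:
      k = 0 : vertex i of the cycle C_n
      k = 1 : subdivision vertex s of the i-th subdivided K_4
              (identified with the leaf attached to cycle vertex i)
      k = 2,3,4,5 : vertices a, b, c, e of the i-th subdivided K_4,
              whose edges are  as, sb, ac, ae, bc, be, ce. *)
Definition Hn_vertex (n : nat) : finType := ('I_n * 'I_6)%type.

Definition gadget_edge (k l : nat) : bool :=
  [|| (k == 0) && (l == 1),
      (k == 1) && (l == 2),
      (k == 1) && (l == 3),
      (k == 2) && (l == 4),
      (k == 2) && (l == 5),
      (k == 3) && (l == 4),
      (k == 3) && (l == 5)  |
      (k == 4) && (l == 5) ].

Definition Hn_adj (n : nat) : rel (Hn_vertex n) :=
  fun x y =>
    let: (i, k) := x in let: (j, l) := y in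
    [|| [&& k == 0 :> nat, l == 0 :> nat &
           ((i.+1 %% n == j) || (j.+1 %% n == i))],
        (i == j) && gadget_edge k l |
        (i == j) && gadget_edge l k ].

(* Main.v *)
Require Import Defs.
From HB Require Import structures.
From mathcomp Require Import all_boot all_order all_algebra.
From mathcomp Require Import zify lra.
Set Implicit Arguments. Unset Strict Implicit.

Definition fortP (T : finType) (adj : rel T) (F : {set T}) :=
  forall x u, x \notin F -> u \in F -> adj x u ->
    exists2 w, w \in F & (w != u) && adj x w.

Lemma fort_hit (T : finType) (adj : rel T) (S F : {set T}) :
  fortP adj F -> zero_forcing_set adj S -> forall y, y \in F ->
  exists2 x, x \in S & x \in F.
Proof.
move=> hF hS y yF.
case: (boolP [exists x, (x \in S) && (x \in F)]).
  by case/existsP=> x /andP[xS xF]; exists x.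
move/existsPn=> hdis.
have key : forall k, forall z, z \in iter k (zf_step adj S) set0 -> z \notin F.
  elim=> [|k IH] z /=; first by rewrite inE.
  rewrite /zf_step in_setU => /orP[zS|].
    by apply/negP=> zF; have := hdis z; rewrite zS zF.
  rewrite inE => /existsP[v /and3P[vX avz /forallP hw]].
  apply/negP=> zF.
  have vF := IH v vX.
  have [w wF /andP[wz avw]] := hF v z vF zF avz.
  have := hw w; rewrite avw wz /= => wX.
  by move: (IH w wX); rewrite wF.
move: hS; rewrite /zero_forcing_set /zf_closure /fixset => /eqP hS.
by have := key #|T| y; rewrite hS inE yF => /(_ isT).
Qed.


Definition k0 : 'I_6 := @Ordinal 6 0 isT.
Definition k1 : 'I_6 := @Ordinal 6 1 isT.
Definition k2 : 'I_6 := @Ordinal 6 2 isT.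
Definition k3 : 'I_6 := @Ordinal 6 3 isT.
Definition k4 : 'I_6 := @Ordinal 6 4 isT.
Definition k5 : 'I_6 := @Ordinal 6 5 isT.

Definition cyc n (p q : 'I_n) : bool := (p.+1 %% n == q) || (q.+1 %% n == p).

Definition Fab n (j : 'I_n) : {set Hn_vertex n} := [set (j, k2); (j, k3)].
Definition Fce n (j : 'I_n) : {set Hn_vertex n} := [set (j, k4); (j, k5)].

Ltac wit w := exists w; rewrite ?inE ?xpair_eqE /= ?eqxx /= ?andbF ?orbT //.

Lemma fort_ab n (j : 'I_n) : fortP (@Hn_adj n) (Fab j).
Proof.
move=> [p [[|[|[|[|[|[|k]]]]]] hk]] u xF; rewrite /Fab !inE => /orP[]/eqP -> {u} adj //.
all: move: xF adj; rewrite !inE !xpair_eqE /=; rewrite ?andbF ?andbT ?orbF //=.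
all: move=> h1 /eqP e; subst p; rewrite ?eqxx in h1 => //; solve [wit (j, k3) | wit (j, k2)].
Qed.

Lemma fort_ce n (j : 'I_n) : fortP (@Hn_adj n) (Fce j).
Proof.
move=> [p [[|[|[|[|[|[|k]]]]]] hk]] u xF; rewrite /Fce !inE => /orP[]/eqP -> {u} adj //.
all: move: xF adj; rewrite !inE !xpair_eqE /=; rewrite ?andbF ?andbT ?orbF //=.
all: move=> h1 /eqP e; subst p; rewrite ?eqxx in h1 => //; solve [wit (j, k5) | wit (j, k4)].
Qed.

Ltac wt w := exists w; rewrite ?inE /= ?xpair_eqE /= ?eqxx /=;
  repeat (match goal with H : is_true _ |- _ => rewrite H | H : (_ \in _) = _ |- _ => rewrite H end); rewrite /= ?andbF ?orbT //.

Definition Fm n (S : {set Hn_vertex n}) (D J : pred 'I_n) (x : Hn_vertex n) : bool :=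
  let p := x.1 in
  match val x.2 with
  | 0 => D p | 1 => J p
  | 2 => J p && ((p, k2) \notin S) | 3 => J p && ((p, k2) \in S)
  | 4 => J p && ((p, k4) \notin S) | 5 => J p && ((p, k4) \in S)
  | _ => false end.

Definition FDJ n S D J : {set Hn_vertex n} := [set x | @Fm n S D J x].

Lemma fort_DJ n (S : {set Hn_vertex n}) (D J : pred 'I_n)
  (hDJ : forall p, D p -> J p)
  (hV1 : forall p, ~~ D p -> J p -> exists q, cyc p q && D q)
  (hV2 : forall p q, ~~ D p -> cyc p q -> D q -> J p \/ exists q', (q' != q) && cyc p q' && D q') :
  fortP (@Hn_adj n) (FDJ S D J).
Proof.
move=> [p [[|[|[|[|[|[|k]]]]]] hk]] [q [[|[|[|[|[|[|l]]]]]] hl]] //.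
all: rewrite /FDJ !inE /Fm /= ?andbF ?orbF ?andbT ?orbT.
all: move=> xF uF adj; try discriminate adj.
- have [Jp|[q' /andP[/andP[q'q cq'] Dq']]] := hV2 p q xF adj uF.
    by wit (p, k1).
  exists (q', k0); rewrite ?inE //= xpair_eqE (negbTE q'q) /=.
  by move: cq'; rewrite /cyc => ->.
- move/eqP: adj => e; subst q.
  have [q0 /andP[cq Dq]] := hV1 p xF uF.
  exists (q0, k0); rewrite ?inE //= xpair_eqE /=.
  by move: cq; rewrite /cyc => ->; rewrite andbF.
all: move/eqP: adj => e; subst q.
all: try by move: xF; rewrite ?hDJ //; case/andP: uF => ->.
all: have hJ : J p by move: uF; case: (J p).
all: move: xF; rewrite hJ /= ?negbK => xF.
all: try discriminate xF.
all: try solve [ wt (p,k1) | wt (p,k5) | wt (p,k4) | case hS: ((p,k4) \in S); [wt (p,k5) | wt (p,k4)] | case hS: ((p,k2) \in S); [wt (p,k3) | wt (p,k2)] ].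
Qed.


Section D.
Variable (n : nat) (G : nat -> bool).
Hypothesis Gper : forall x, G (x + n) = G x.
Hypothesis n2 : 2 <= n.
Hypothesis nev : ~~ odd n.

Definition pat i m := [/\ G i, (forall t, t <= m -> G (i + t.*2.+1)) & G (i + m.*2.+2)].
Hypothesis NP : forall i m, m.*2.+2 <= n -> ~ pat i m.

Definition chain i d := G i && [forall o : 'I_n, (odd o && (o <= d)) ==> G (i + o)].
Definition psi j := [exists d : 'I_n, (0 < d) && chain (j + n - d) d].

Lemma chainP i d : d < n -> chain i d -> G i /\ forall o, odd o -> o <= d -> G (i + o).
Proof.
move=> dn /andP[Gi /forallP h]; split=> // o oo od.
have on : o < n by lia.
by have := h (Ordinal on); rewrite /= oo od.
Qed.

Lemma chainI i d : d < n -> G i -> (forall o, odd o -> o <= d -> G (i + o)) -> chain i d.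
Proof.
move=> dn Gi h; rewrite /chain Gi /=; apply/forallP=> o; apply/implyP=> /andP[oo od].
exact: h.
Qed.

Lemma chain_end i d : 0 < d -> d < n -> chain i d -> ~~ odd d -> G (i + d) = false.
Proof.
move=> d0 dn /chainP [//|Gi h] ev; apply/negP=> Gd.
apply: (NP (m := d./2.-1) (i := i)); first by lia.
split=> //.
  move=> t tm; apply: h; first by rewrite /= odd_double.
  have: d = d./2.*2 by rewrite -[LHS]odd_double_half (negbTE ev).
  lia.
have -> : (d./2.-1).*2.+2 = d.
  have: d = d./2.*2 by rewrite -[LHS]odd_double_half (negbTE ev).
  lia.
exact: Gd.
Qed.

Lemma chain_end_odd i d : d < n -> chain i d -> odd d -> G (i + d.+1) = false.
Proof.
move=> dn /chainP [//|Gi h] od; apply/negP=> Gd.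
apply: (NP (m := d./2) (i := i)).
  have: d = (d./2).*2.+1 by rewrite -[LHS]odd_double_half od.
  lia.
split=> //.
  move=> t tm; apply: h; first by rewrite /= odd_double.
  have: d = d./2.*2.+1 by rewrite -[LHS]odd_double_half od.
  lia.
have -> : (d./2).*2.+2 = d.+1.
  have: d = d./2.*2.+1 by rewrite -[LHS]odd_double_half od.
  lia.
exact: Gd.
Qed.

Lemma mono j : G j != G j.+1 -> psi j -> psi j.+1.
Proof.
move=> neq /existsP[d /andP[d0 ch]].
have dn := ltn_ord d.
have hi : j + n - d + d = j + n by lia.
have [Gi h] := chainP dn ch.
case: (ltnP d.+1 n) => dn1.
  apply/existsP; exists (Ordinal dn1) => /=; apply: chainI => //.
  have -> : j.+1 + n - d.+1 = j + n - d by lia.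
  move=> o oo od; case: (ltngtP o d.+1) => [od'|od'|eo]; [by apply: h | by lia |]; subst o.
  have hd : ~~ odd d by move: oo => /=.
  have := chain_end d0 dn ch hd; rewrite hi Gper => Gj0.
  move: neq; rewrite Gj0 /= => Gj1.
  have -> : j + n - d + d.+1 = j.+1 + n by lia.
  by rewrite Gper; move: Gj1; case: (G j.+1).
exfalso.
have dd : d.+1 = n by lia.
have od : odd d.
  have : odd d.+1 = odd n by rewrite dd.
  by rewrite /= => e; move: nev; rewrite -e; case: (odd d).
have := h d od (leqnn d); rewrite hi Gper.
move: Gi; have -> : j + n - d = j.+1 by lia.
by move: neq => /[swap] -> /[swap] ->.
Qed.

Lemma local j : G j + G j.+1 + psi j <= 1 + psi j.+1.
Proof.
case Gj: (G j); case Gj1: (G j.+1) => /=.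
- have -> : psi j.+1.
    apply/existsP; have n1 : 1 < n by lia.
    exists (Ordinal n1) => /=; apply: chainI => //.
      have -> : j.+1 + n - 1 = j + n by lia.
      by rewrite Gper.
    move=> o oo o1; have -> : o = 1 by move: oo; case: o o1 => [|[|]].
    have -> : j.+1 + n - 1 + 1 = j.+1 + n by lia.
    by rewrite Gper.
  case P: (psi j) => //; exfalso.
  case/existsP: P => d /andP[d0 ch].
  have hi : j + n - d + d = j + n by have := ltn_ord d; lia.
  case: (boolP (odd d)) => od.
  + have := chain_end_odd (ltn_ord d) ch od.
    have -> : j + n - d + d.+1 = j.+1 + n by have := ltn_ord d; lia.
    by rewrite Gper Gj1.
  + have := chain_end d0 (ltn_ord d) ch od.
    by rewrite hi Gper Gj.
- have := @mono j; rewrite Gj Gj1 => /(_ isT).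
  by case: (psi j); case: (psi j.+1) => // /(_ isT).
- have := @mono j; rewrite Gj Gj1 => /(_ isT).
  by case: (psi j); case: (psi j.+1) => // /(_ isT).
- by case: (psi j); case: (psi j.+1).
Qed.

Lemma psi_per j : psi (j + n) = psi j.
Proof.
apply: eq_existsb => d; congr (_ && _).
have -> : j + n + n - d = (j + n - d) + n by have := ltn_ord d; lia.
rewrite /chain Gper; congr (_ && _); apply: eq_forallb => o.
by rewrite addnAC Gper.
Qed.

Lemma sum_shift (f : nat -> nat) : (forall x, f (x + n) = f x) ->
  \sum_(j < n) f j.+1 = \sum_(j < n) f j.
Proof.
move=> fp; case: n n2 fp => [//|n'] _ fp.
rewrite big_ord_recr big_ord_recl /= addnC; congr (_ + _).
by have := fp 0.
Qed.

Lemma sum_bound : (\sum_(j < n) (G j : nat)).*2 <= n.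
Proof.
have H : \sum_(j < n) (G j + G j.+1 + psi j) <= \sum_(j < n) (1 + psi j.+1).
  by apply: leq_sum => j _; exact: local.
move: H; rewrite !big_split /=.
rewrite (sum_shift (f := fun j => (G j : nat))); last by move=> x; rewrite Gper.
rewrite (sum_shift (f := fun j => (psi j : nat))); last by move=> x; rewrite psi_per.
by rewrite sum1_card card_ord addnn leq_add2r.
Qed.
End D.


Definition off n (i : nat) (p : 'I_n) : nat := (p + n - i) %% n.

Lemma off_lt n i (p : 'I_n) : off i p < n.
Proof. by rewrite /off ltn_pmod // (leq_ltn_trans _ (ltn_ord p)). Qed.

Lemma off_char n i (p : 'I_n) : i < n -> (i + off i p) %% n = p.
Proof.
move=> ilt; rewrite /off modnDmr.
have -> : i + (p + n - i) = p + n by lia.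
by rewrite modnDr modn_small.
Qed.

Lemma off_uniq n i a b : a < n -> b < n -> (i + a) %% n = (i + b) %% n -> a = b.
Proof.
move=> an bn /eqP; rewrite eqn_modDl !modn_small //; by move/eqP.
Qed.

Definition pos n (n0 : 0 < n) (i x : nat) : 'I_n := Ordinal (ltn_pmod (i + x) n0).

Lemma off_pos n (n0 : 0 < n) i x : i < n -> off i (pos n0 i x) = x %% n.
Proof.
move=> ilt; apply: (@off_uniq n i); [exact: off_lt | by rewrite ltn_pmod |].
by rewrite off_char // /= modnDmr.
Qed.

Lemma off_cyc n i (p q : 'I_n) : i < n -> cyc p q ->
  (off i q == (off i p).+1 %% n) || (off i p == (off i q).+1 %% n).
Proof.
move=> ilt /orP[] /eqP e; apply/orP; [left | right]; apply/eqP;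
  apply: (@off_uniq n i); rewrite ?off_lt ?ltn_pmod //; try lia.
- rewrite off_char // modnDmr -e addnS.
  by rewrite -{1}(off_char p ilt) -[((i + off i p) %% n).+1]addn1 modnDml addn1.
- rewrite off_char // modnDmr -e addnS.
  by rewrite -{1}(off_char q ilt) -[((i + off i q) %% n).+1]addn1 modnDml addn1.
Qed.

Lemma cyc_succ n (n0 : 0 < n) i (p : 'I_n) : i < n -> cyc p (pos n0 i (off i p).+1).
Proof.
move=> ilt; rewrite /cyc /=; apply/orP; left.
rewrite addnS -{1}(off_char p ilt).
by rewrite -[((i + off i p) %% n).+1]addn1 modnDml addn1.
Qed.

Lemma cyc_pred n (n0 : 0 < n) i (p : 'I_n) : i < n -> cyc p (pos n0 i (off i p + n.-1)).
Proof.
move=> ilt; rewrite /cyc /=; apply/orP; right.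
rewrite -addn1 modnDml.
have -> : i + (off i p + n.-1) + 1 = (i + off i p) + n by lia.
by rewrite modnDr off_char.
Qed.

Definition Dseg n i m (p : 'I_n) := odd (off i p) && (off i p <= m.*2.+1).
Definition Jseg n i m (p : 'I_n) :=
  [|| Dseg i m p, off i p == 0 | off i p == m.*2.+2 %% n].

Lemma segV1 n (n0 : 0 < n) i m : i < n -> m.*2.+2 <= n ->
  forall p : 'I_n, ~~ Dseg i m p -> Jseg i m p -> exists q, cyc p q && Dseg i m q.
Proof.
move=> ilt hm p nD; rewrite /Jseg (negbTE nD) /= => hJ.
have hop := off_lt i p.
have [o0|o0] : off i p = 0 \/ off i p = m.*2.+2.
  case/orP: hJ => /eqP ->; first by left.
  case: (ltngtP m.*2.+2 n) => h; [by right; rewrite modn_small | lia | by left; rewrite h modnn].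
- exists (pos n0 i (off i p).+1); rewrite cyc_succ //= /Dseg off_pos // o0 modn_small //.
  lia.
- exists (pos n0 i (off i p + n.-1)); rewrite cyc_pred //= /Dseg off_pos // o0.
  have -> : (m.*2.+2 + n.-1) %% n = m.*2.+1.
    have -> : m.*2.+2 + n.-1 = m.*2.+1 + n by lia.
    rewrite modnDr modn_small //; lia.
  by rewrite /= odd_double leqnn.
Qed.

Lemma segV2 n (n0 : 0 < n) i m : i < n -> m.*2.+2 <= n ->
  forall p q : 'I_n, ~~ Dseg i m p -> cyc p q -> Dseg i m q ->
  Jseg i m p \/ exists q', (q' != q) && cyc p q' && Dseg i m q'.
Proof.
move=> ilt hm p q nD cpq /andP[oq lq].
have hop := off_lt i p; have hoq := off_lt i q.
case: (boolP (Jseg i m p)) => hJ; first by left.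
right; move: hJ; rewrite /Jseg (negbTE nD) /= negb_or => /andP[a0 a2].
set a := off i p in a0 a2 hop nD *.
set b := off i q in oq lq hoq.
have a2' : a != m.*2.+2.
  apply/eqP => e; move: a2; case: (ltngtP m.*2.+2 n) => h; last by lia.
    by rewrite modn_small // -e eqxx.
  lia.
have hb : a.+1 = b \/ a = b.+1.
  have := off_cyc ilt cpq; rewrite -/a -/b => /orP[] /eqP e.
  - case: (ltngtP a.+1 n) => h.
    + by left; move: e; rewrite modn_small.
    + lia.
    + by move: e oq; rewrite h modnn => ->.
  - case: (ltngtP b.+1 n) => h.
    + by right; move: e; rewrite modn_small.
    + lia.
    + by move: e a0; rewrite h modnn => ->.
have ev : ~~ odd a.
  case: hb => e; first by move: oq; rewrite -e.
  by rewrite e /= negbK.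
have a1 : a != 1 by apply: contraNneq ev => ->.
have a3 : a != m.*2.+1 by apply: contraNneq ev => ->; rewrite /= odd_double.
have lo : 2 <= a by lia.
have hi : a <= m.*2 by lia.
have oS : off i (pos n0 i a.+1) = a.+1 by rewrite off_pos // modn_small //; lia.
have oP : off i (pos n0 i (a + n.-1)) = a.-1.
  rewrite off_pos //; have -> : a + n.-1 = a.-1 + n by lia.
  by rewrite modnDr modn_small //; lia.
have DS : Dseg i m (pos n0 i a.+1) by rewrite /Dseg oS /= ev; lia.
have DP : Dseg i m (pos n0 i (a + n.-1)).
  rewrite /Dseg oP; apply/andP; split; last by lia.
  have e : a = a.-1.+1 by lia.
  by move: ev; rewrite {1}e /= negbK.
have cS : cyc p (pos n0 i a.+1) by apply: cyc_succ.
have cP : cyc p (pos n0 i (a + n.-1)) by apply: cyc_pred.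
have ne : pos n0 i a.+1 != pos n0 i (a + n.-1).
  by apply/eqP => e; move: oS; rewrite e oP; lia.
case: (eqVneq q (pos n0 i a.+1)) => e.
  by exists (pos n0 i (a + n.-1)); rewrite cP DP e eq_sym ne.
by exists (pos n0 i a.+1); rewrite cS DS eq_sym e.
Qed.


Definition rowc n (S : {set Hn_vertex n}) (p : 'I_n) : nat := \sum_(k < 6) ((p, k) \in S : nat).
Definition goodb n (S : {set Hn_vertex n}) (p : 'I_n) : bool := rowc S p <= 2.
Definition Gg n (S : {set Hn_vertex n}) (x : nat) : bool :=
  [exists p : 'I_n, (val p == x %% n) && goodb S p].

Lemma sum6 (f : 'I_6 -> nat) : \sum_(k < 6) f k = f k0 + f k1 + f k2 + f k3 + f k4 + f k5.
Proof.
rewrite !big_ord_recl big_ord0 addn0 !addnA.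
by do 6 (congr (_ + _) || (congr f; apply: val_inj)).
Qed.

Lemma hits n (S : {set Hn_vertex n}) (zS : zero_forcing_set (@Hn_adj n) S) (p : 'I_n) :
  ((p, k2) \in S) || ((p, k3) \in S) /\ ((p, k4) \in S) || ((p, k5) \in S).
Proof.
split.
  have hy : (p, k2) \in Fab p by rewrite !inE eqxx.
  have [x xS] := fort_hit (@fort_ab n p) zS hy.
  by rewrite !inE => /orP[] /eqP <-; rewrite xS ?orbT.
have hy : (p, k4) \in Fce p by rewrite !inE eqxx.
have [x xS] := fort_hit (@fort_ce n p) zS hy.
by rewrite !inE => /orP[] /eqP <-; rewrite xS ?orbT.
Qed.

Lemma good_facts n (S : {set Hn_vertex n}) (zS : zero_forcing_set (@Hn_adj n) S) (p : 'I_n) :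
  goodb S p -> [/\ (p, k0) \notin S, (p, k1) \notin S,
                  ~~ (((p, k2) \in S) && ((p, k3) \in S)) &
                  ~~ (((p, k4) \in S) && ((p, k5) \in S))].
Proof.
have [h1 h2] := hits zS p; rewrite /goodb /rowc sum6.
move: h1 h2.
case: ((p, k0) \in S); case: ((p, k1) \in S); case: ((p, k2) \in S);
  case: ((p, k3) \in S); case: ((p, k4) \in S); case: ((p, k5) \in S) => //.
Qed.

Lemma row_ge n (S : {set Hn_vertex n}) (zS : zero_forcing_set (@Hn_adj n) S) (p : 'I_n) :
  3 <= rowc S p + goodb S p.
Proof.
have [h1 h2] := hits zS p; rewrite /goodb /rowc sum6.
move: h1 h2.
case: ((p, k0) \in S); case: ((p, k1) \in S); case: ((p, k2) \in S);
  case: ((p, k3) \in S); case: ((p, k4) \in S); case: ((p, k5) \in S) => //.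
Qed.

Lemma Gg_per n S x : @Gg n S (x + n) = Gg S x.
Proof. by rewrite /Gg modnDr. Qed.

Lemma Gg_val n S (p : 'I_n) x : x %% n = p -> @Gg n S x = goodb S p.
Proof.
move=> e; rewrite /Gg e; apply/existsP/idP => [[p' /andP[/eqP/val_inj -> //]]|gp].
by exists p; rewrite eqxx.
Qed.

Lemma Gg_mod n S i x : @Gg n S (i %% n + x) = Gg S (i + x).
Proof. by rewrite /Gg modnDml. Qed.

Lemma no_pat n (S : {set Hn_vertex n}) (zS : zero_forcing_set (@Hn_adj n) S) (n0 : 0 < n) :
  forall i m, m.*2.+2 <= n -> ~ pat (Gg S) i m.
Proof.
move=> i0 m hm [P0 P1 P2].
set i := i0 %% n.
have ilt : i < n by rewrite ltn_pmod.
have Jg : forall p, Jseg i m p -> goodb S p.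
  move=> p hJ; rewrite -(Gg_val S (off_char p ilt)) Gg_mod.
  move: hJ; rewrite /Jseg /Dseg => /orP[/andP[od ol]|/orP[]/eqP ->].
  - have e : off i p = (off i p)./2.*2.+1 by rewrite -[LHS]odd_double_half od.
    rewrite e; apply: P1; lia.
  - by rewrite addn0.
  - by move: P2; rewrite /Gg modnDmr.
pose D := @Dseg n i m; pose J := @Jseg n i m.
have hDJ : forall p, D p -> J p by move=> p hD; rewrite /J /Jseg; move: hD; rewrite /D => ->.
have fF := @fort_DJ n S D J hDJ (segV1 n0 ilt hm) (segV2 n0 ilt hm).
have hy : (pos n0 i 0, k1) \in FDJ S D J.
  by rewrite inE /Fm /= /J /Jseg off_pos // mod0n eqxx orbT.
have [[p k] xS] := fort_hit fF zS hy.
rewrite inE /Fm /=; move: xS.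
have gf := fun h => good_facts zS (Jg p h).
case: k => [[|[|[|[|[|[|k]]]]]] hk] //= xS.
- by move=> hD; have [/negP []] := gf (hDJ _ hD); move: xS; congr (_ \in S); congr pair; apply: val_inj.
- have ek : Ordinal hk = k1 by apply: val_inj.
  rewrite ek in xS.
  by move=> hJ; have [_ /negP []] := gf hJ.
- have ek : Ordinal hk = k2 by apply: val_inj.
  rewrite ek in xS.
  by case/andP=> _ /negP.
- have ek : Ordinal hk = k3 by apply: val_inj.
  rewrite ek in xS.
  by case/andP=> hJ h; have [_ _ /negP [] ] := gf hJ; rewrite h.
- have ek : Ordinal hk = k4 by apply: val_inj.
  rewrite ek in xS.
  by case/andP=> _ /negP.
- have ek : Ordinal hk = k5 by apply: val_inj.
  rewrite ek in xS.
  by case/andP=> hJ h; have [_ _ _ /negP [] ] := gf hJ; rewrite h.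
Qed.

Lemma card_rows n (S : {set Hn_vertex n}) : #|S| = \sum_(p : 'I_n) rowc S p.
Proof.
rewrite /rowc pair_bigA /= -sum1_card big_mkcond /=.
by apply: eq_bigr => -[p k] _; case: (_ \in S).
Qed.

Lemma main_bound n (hn6 : 6 <= n) (hdiv : 6 %| n) (S : {set Hn_vertex n})
  (zS : zero_forcing_set (@Hn_adj n) S) : 5 * n <= 2 * #|S|.
Proof.
have n0 : 0 < n by lia.
have nev : ~~ odd n.
  by move: hdiv => /dvdnP[k ->]; rewrite oddM /= andbF.
have sb := @sum_bound n (Gg S) (@Gg_per n S) (leq_trans (isT : 2 <= 6) hn6) nev (no_pat zS n0).
have e : \sum_(j < n) (Gg S j : nat) = \sum_(p : 'I_n) (goodb S p : nat).
  by apply: eq_bigr => p _; rewrite (@Gg_val n S p) // modn_small.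
have h3 : \sum_(p : 'I_n) 3 <= \sum_(p : 'I_n) (rowc S p + goodb S p).
  by apply: leq_sum => p _; exact: row_ge.
move: h3 sb; rewrite big_split /= -card_rows e sum_nat_const card_ord.
rewrite -mul2n; move: (\sum_(i < n) (goodb S i : nat)) => g.
move: #|S| => s; lia.
Qed.


Unset Implicit Arguments.
Import Order.TTheory GRing.Theory Num.Theory.
Local Open Scope ring_scope.

Theorem proposition2 (n : nat) (hn6 : (6 <= n)%N) (hdiv : (6 %| n)%N) :
  (5%:R / 12%:R : rat) <= (zf_number (@Hn_adj n))%:R / (#|Hn_vertex n|)%:R.
Proof.
have cardT : #|Hn_vertex n| = (n * 6)%N by rewrite /Hn_vertex card_prod !card_ord.
have hz : (5 * n <= 2 * zf_number (@Hn_adj n))%N.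
  rewrite /zf_number; apply: (big_ind (fun x => 5 * n <= 2 * x)%N).
  - rewrite cardT; lia.
  - move=> x y hx hy; rewrite /minn; by case: ifP.
  - by move=> S zS; apply: main_bound.
rewrite cardT ler_pdivlMr; last by rewrite ltr0n; lia.
rewrite mulrAC ler_pdivrMr; last by rewrite ltr0n.
move: hz; rewrite -(ler_nat rat) !natrM.
move: (zf_number _)%:R (n%:R : rat) => z m.
move=> h; lra.
Qed.
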